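(* Let $f_\bullet\colon X\to Z$ be a non-expansive map between finite metric spaces and $f\colon V\to U$ the induced persistence morphism, $V=\mathrm{PH}_0(X)$, $U=\mathrm{PH}_0(Z)$. Then the block function $\mathcal{M}^0_f$ induces a unique partial matching $\sigma^f\colon\mathrm{Rep}\,\mathcal{B}(V)\nrightarrow\mathrm{Rep}\,\mathcal{B}(U)$; that is, $\sum_{b}\mathcal{M}^0_f(a,b)\le m^V(a)$ for every $a\in S^V$ and $\sum_a\mathcal{M}^0_f(a,b)\le m^U(b)$ for every $b\in S^U$, so that there is a (canonical) partial matching matching exactly $\mathcal{M}^0_f(a,b)$ copies of the bar $[0,a)$ with copies of the bar $[0,b)$ for all $a,b$.
   Context: All vector spaces are over $\mathbb{Z}_2$. A map $f_\bullet\colon X\to Z$ is non-expansive if $d^Z(f_\bullet(x),f_\bullet(y))\le d^X(x,y)$. For a finite metric space $X$ and $r\ge0$, $\mathrm{VR}_r(X)$ is the graph on $X$ with edges $[x,y]$ for $d^X(x,y)\le r$; $\mathrm{PH}_0(X)$ is the persistence module $r\mapsto H_0(\mathrm{VR}_r(X))$ (free on connected components) with structure maps $\rho_{rs}$ induced by inclusion; a non-expansive map induces graph maps $\mathrm{VR}_r(X)\to\mathrm{VR}_r(Z)$ and hence a persistence morphism $f$. The barcode $\mathcal{B}(V)=(S^V,m^V)$ is the multiset of finite death values $b>0$ of the bars $[0,b)$ of $V$ (infinite bar excluded), with multiplicities $m^V(b)$. For a multiset $(S,m)$, $\mathrm{Rep}(S,m)=\{(s,\ell): s\in S,\ 1\le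 \ell\le m(s)\}$. A partial matching $\mathrm{Rep}(S,m)\nrightarrow \mathrm{Rep}(S',m')$ is a bijection between subsets of the two representations. With $\ker^+_b(U)=\ker(\rho^U_{0b})$, $\ker^-_b(U)=\bigcup_{0\le r<b}\ker(\rho^U_{0r})$ and $f_0$ the degree-0 component of $f$, $\mathcal{M}^0_f(a,b)=\dim\frac{f_0(\ker^+_a V)\cap \ker^+_b U}{f_0(\ker^-_a V)\cap\ker^+_b U+f_0(\ker^+_a V)\cap \ker^-_b U}$ for $a,b>0$. *)

(* Defs.v *)
(* Degree-0 persistent homology of Vietoris-Rips graphs
   over Z_2 = 'F_2, encoded with mxalgebra row spaces. *)
From HB Require Import structures.
From mathcomp Require Import all_boot all_order all_algebra.
Set Implicit Arguments. Unset Strict Implicit. Unset Printing Implicit Defensive.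
Import Order.TTheory GRing.Theory Num.Theory.
Local Open Scope ring_scope.

Section PH0.
Variable R : realFieldType.

Definition is_metric (X : finType) (d : X -> X -> R) : Prop :=
  [/\ (forall x y, d x y = 0 <-> x = y),
      (forall x y, d x y = d y x) &
      (forall x y z, d x z <= d x y + d y z)].

Definition non_expansive (X Z : finType) (dX : X -> X -> R) (dZ : Z -> Z -> R)
  (f : X -> Z) : Prop := forall x y, dZ (f x) (f y) <= dX x y.

Variable X : finType.
Variable d : X -> X -> R.

(* 0-chains C_0(X) = Z_2^X, as row vectors indexed by enum_rank;
   e x is the vertex x. *)
Definition vtx (x : X) : 'rV['F_2]_#|X| := delta_mx 0 (enum_rank x).

(* boundaries of the edges [x,y] of VR_r(X) (d x y <= r), resp. of the
   edges with d x y < b *)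
Definition bnd_le (r : R) : 'M['F_2]_#|X| :=
  (\sum_(p : X * X | (d p.1 p.2 <= r)%R) <<vtx p.1 - vtx p.2>>)%MS.
Definition bnd_lt (b : R) : 'M['F_2]_#|X| :=
  (\sum_(p : X * X | (d p.1 p.2 < b)%R) <<vtx p.1 - vtx p.2>>)%MS.

(* H_0(VR_r(X)) = C_0 / B_r; the structure map rho_{0r} from
   H_0(VR_0(X)) = C_0 (B_0 = 0 for a metric) is the quotient map, in
   coordinates given by cokermx. *)
Definition rho0 (r : R) : 'M['F_2]_#|X| := cokermx (bnd_le r).

Definition kerP (b : R) : 'M['F_2]_#|X| := kermx (rho0 b).
(* ker^-_b = union_{0 <= r < b} ker rho_{0r} (the kernel of the map to
   the colimit H_0(VR_{<b}(X)) = C_0 / span{edges of length < b}) *)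
Definition kerM (b : R) : 'M['F_2]_#|X| := kermx (cokermx (bnd_lt b)).

(* multiplicity of the bar [0,b) in the barcode of PH_0(X):
   dim ker^+_b - dim ker^-_b (number of components merging at scale b) *)
Definition mult (b : R) : nat := (\rank (kerP b) - \rank (kerM b))%N.

Definition inRep (p : R * nat) : Prop := 0 < p.1 /\ (1 <= p.2 <= mult p.1)%N.

End PH0.

(* f_0 : H_0(VR_0(X)) = C_0(X) -> C_0(Z) = H_0(VR_0(Z)), x |-> f x *)
Definition push (X Z : finType) (f : X -> Z) : 'M['F_2]_(#|X|, #|Z|) :=
  \matrix_(i, j) ((f (enum_val i) == enum_val j)%:R).

(* block function M^0_f(a,b) = dim of the quotient
   (f0(ker^+_a V) ∩ ker^+_b U) / (f0(ker^-_a V) ∩ ker^+_b U + f0(ker^+_a V) ∩ ker^-_b U)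
   (the denominator is a subspace of the numerator) *)
Definition blockM (R : realFieldType) (X Z : finType) (dX : X -> X -> R)
  (dZ : Z -> Z -> R) (f : X -> Z) (a b : R) : nat :=
  let F := push f in
  let Ap := (kerP dX a *m F)%MS in
  let Am := (kerM dX a *m F)%MS in
  let Bp := kerP dZ b in
  let Bm := kerM dZ b in
  (\rank (Ap :&: Bp)%MS - \rank (Am :&: Bp + Ap :&: Bm)%MS)%N.

(* partial matching Rep B(V) -/-> Rep B(U), as a bijection between subsets,
   given by its graph *)
Definition partial_matching (R : realFieldType) (X Z : finType)
  (dX : X -> X -> R) (dZ : Z -> Z -> R)
  (sigma : R * nat -> R * nat -> bool) : Prop :=
  [/\ (forall p q, sigma p q -> inRep dX p /\ inRep dZ q),
      (forall p q q', sigma p q -> sigma p q' -> q = q') &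
      (forall p p' q, sigma p q -> sigma p' q -> p = p')].

Definition nmatched (R : realFieldType) (X Z : finType)
  (dX : X -> X -> R) (dZ : Z -> Z -> R)
  (sigma : R * nat -> R * nat -> bool) (a b : R) : nat :=
  #|[set ij : 'I_(mult dX a) * 'I_(mult dZ b) |
       sigma (a, ij.1.+1) (b, ij.2.+1)]|.

(* Main.v *)
Require Import Defs.
From HB Require Import structures.
From mathcomp Require Import all_boot all_order all_algebra.
From mathcomp Require Import zify.
Set Implicit Arguments. Unset Strict Implicit. Unset Printing Implicit Defensive.
Import Order.TTheory GRing.Theory Num.Theory.
Local Open Scope ring_scope.

Section LA.
Variable K : fieldType.

Lemma rank_eqS m1 m2 n (A : 'M[K]_(m1,n)) (B : 'M[K]_(m2,n)) :
  (A <= B)%MS -> (B <= A)%MS -> \rank A = \rank B.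
Proof. by move=> h1 h2; apply/eqmx_rank; rewrite /eqmx h1 h2. Qed.

Definition gb m1 m2 n (Am Ap : 'M[K]_(m1,n)) (Bm Bp : 'M[K]_(m2,n)) : nat :=
  (\rank (Ap :&: Bp)%MS - \rank (Am :&: Bp + Ap :&: Bm)%MS)%N.

Lemma gb_W m1 m2 n (Am Ap : 'M[K]_(m1,n)) (Bm Bp : 'M[K]_(m2,n)) :
  (Am <= Ap)%MS -> (Bm <= Bp)%MS ->
  gb Am Ap Bm Bp = (\rank (Ap :&: Bp + Am)%MS - \rank (Ap :&: Bm + Am)%MS)%N.
Proof.
move=> hA hB; rewrite /gb.
have e1 := mxrank_sum_cap (Ap :&: Bp)%MS Am.
have e2 := mxrank_sum_cap (Ap :&: Bm)%MS Am.
have e3 := mxrank_sum_cap (Am :&: Bp)%MS (Ap :&: Bm)%MS.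
have r1 : \rank ((Ap :&: Bp) :&: Am)%MS = \rank (Am :&: Bp)%MS.
  apply: rank_eqS; rewrite !sub_capmx ?capmxSr ?capmxSl //=.
    by rewrite (submx_trans (capmxSl _ _) (capmxSr _ _)).
  by rewrite (submx_trans (capmxSl _ _) hA).
have r2 : \rank ((Ap :&: Bm) :&: Am)%MS = \rank (Am :&: Bm)%MS.
  apply: rank_eqS; rewrite !sub_capmx ?capmxSr ?capmxSl //=.
    by rewrite (submx_trans (capmxSl _ _) (capmxSr _ _)).
  by rewrite (submx_trans (capmxSl _ _) hA).
have r3 : \rank ((Am :&: Bp) :&: (Ap :&: Bm))%MS = \rank (Am :&: Bm)%MS.
  apply: rank_eqS; rewrite !sub_capmx ?capmxSr ?capmxSl //=.
    by rewrite (submx_trans (capmxSl _ _) (capmxSl _ _)) (submx_trans (capmxSr _ _) (capmxSr _ _)).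
  by rewrite (submx_trans (capmxSl _ _) hA) (submx_trans (capmxSr _ _) hB).
lia.
Qed.

Lemma gb_sym m1 m2 n (Am Ap : 'M[K]_(m1,n)) (Bm Bp : 'M[K]_(m2,n)) :
  gb Am Ap Bm Bp = gb Bm Bp Am Ap.
Proof.
rewrite /gb (capmxC Ap Bp) addsmxC (capmxC Am Bp) (capmxC Ap Bm) //.
Qed.

Lemma rank_mul_diff m1 m2 n p (P : 'M[K]_(m1,n)) (Q : 'M[K]_(m2,n)) (F : 'M[K]_(n,p)) :
  (Q <= P)%MS -> (\rank (P *m F) - \rank (Q *m F) <= \rank P - \rank Q)%N.
Proof.
move=> hQ.
have e := mxrank_cap_compl P Q.
have rq : \rank (P :&: Q)%MS = \rank Q by apply: rank_eqS; rewrite ?capmxSr // sub_capmx hQ submx_refl.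
have s1 : (P <= (P :\: Q) + Q)%MS.
  rewrite -{1}(addsmx_diff_cap_eq P Q) addsmxS ?capmxSr //.
have s2 : (P *m F <= (P :\: Q) *m F + Q *m F)%MS.
  by rewrite -addsmxMr submxMr.
have l1 := mxrankS s2.
have l2 := (mxrank_adds_leqif ((P :\: Q)%MS *m F) (Q *m F)).1.
have l3 := mxrankM_maxl (P :\: Q)%MS F.
lia.
Qed.

Variable R : realFieldType.

Lemma tele (lo hi : R -> nat) (L H : nat) (s : seq R) :
  (forall b, b \in s -> (L <= lo b)%N) -> (forall b, (lo b <= hi b)%N) ->
  (forall b, (hi b <= H)%N) -> (forall b b', b < b' -> (hi b <= lo b')%N) ->
  sorted <%O s -> (\sum_(b <- s) (hi b - lo b) <= H - L)%N.
Proof.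
move=> + h2 h3 h4; elim: s L => [|b s IH] L h1 /= hs; first by rewrite big_nil.
rewrite big_cons.
have hl := h1 b (mem_head _ _).
have := IH (hi b) _ (path_sorted hs).
have hall := order_path_min (@lt_trans _ R) hs.
have := h2 b; have := h3 b.
move=> a1 a2 a3; apply: leq_trans (_ : hi b - lo b + (H - hi b) <= _)%N.
  by rewrite leq_add2l; apply: a3 => b' hb'; apply: h4; exact: (allP hall).
lia.
Qed.

Lemma sumA m1 m2 n (Am Ap : 'M[K]_(m1,n)) (Bm Bp : R -> 'M[K]_(m2,n)) (s : seq R) :
  (Am <= Ap)%MS -> (forall b, Bm b <= Bp b)%MS ->
  (forall b b', b < b' -> (Bp b <= Bm b')%MS) -> uniq s ->
  (\sum_(b <- s) gb Am Ap (Bm b) (Bp b) <= \rank Ap - \rank Am)%N.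
Proof.
move=> hA hB hC us.
rewrite -(perm_big _ (permEl (perm_sort <=%O s))).
under eq_bigr => b _ do rewrite gb_W //.
apply: tele.
- by move=> b _; apply: mxrankS; rewrite addsmxSr.
- by move=> b; apply: mxrankS; rewrite addsmxS ?capmxS.
- by move=> b; apply: mxrankS; rewrite addsmx_sub capmxSl.
- by move=> b b' lt; apply: mxrankS; rewrite addsmxS ?capmxS ?hC.
- by rewrite sort_lt_sorted.
Qed.

Lemma sumB m1 m2 n (Am Ap : R -> 'M[K]_(m1,n)) (Bm Bp : 'M[K]_(m2,n)) (s : seq R) :
  (Bm <= Bp)%MS -> (forall a, Am a <= Ap a)%MS ->
  (forall a a', a < a' -> (Ap a <= Am a')%MS) -> uniq s ->
  (\sum_(a <- s) gb (Am a) (Ap a) Bm Bp <= \rank Bp - \rank Bm)%N.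
Proof.
move=> hB hA hC us.
under eq_bigr => a _ do rewrite gb_sym.
exact: sumA.
Qed.

End LA.

Lemma interval_sum (m lo hi : nat) : (lo <= hi)%N ->
  (\sum_(i < m) ((lo <= i < hi)%N : nat) = minn hi m - minn lo m)%N.
Proof.
move=> h; elim: m => [|m IH]; first by rewrite big_ord0 !minn0.
rewrite big_ord_recr /= IH.
case: (leqP lo m) => h1; case: (ltnP m hi) => h2 /=; lia.
Qed.
Lemma test (I J : finType) (P : I -> J -> bool) :
  #|[set ij : I * J | P ij.1 ij.2]| = (\sum_(i : I) \sum_(j : J) (P i j : nat))%N.
Proof.
rewrite -sum1_card big_mkcond /= pair_big /=.
by apply: eq_bigr => -[i j] _; rewrite inE /=; case: (P i j).
Qed.

Lemma kerco m n (B : 'M['F_2]_(m,n)) :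
  (kermx (cokermx B) <= B)%MS /\ (B <= kermx (cokermx B))%MS.
Proof. by rewrite submxE -sub_kermx submx_refl sub_kermx mulmx_coker eqxx. Qed.

Section PHL.
Variable R : realFieldType.
Variable X : finType.
Variable d : X -> X -> R.

Lemma bnd_lt_le b : (bnd_lt d b <= bnd_le d b)%MS.
Proof.
apply/sumsmx_subP => p hp; apply: (sumsmx_sup p); first exact: ltW.
exact: submx_refl.
Qed.

Lemma bnd_le_lt b b' : b < b' -> (bnd_le d b <= bnd_lt d b')%MS.
Proof.
move=> hb; apply/sumsmx_subP => p hp; apply: (sumsmx_sup p); first exact: le_lt_trans hp hb.
exact: submx_refl.
Qed.

Lemma kerM_P b : (kerM d b <= kerP d b)%MS.
Proof.
rewrite /kerM /kerP /rho0.
case: (kerco (bnd_lt d b)) => h1 _; case: (kerco (bnd_le d b)) => _ h2.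
exact: submx_trans h1 (submx_trans (bnd_lt_le b) h2).
Qed.

Lemma kerP_M b b' : b < b' -> (kerP d b <= kerM d b')%MS.
Proof.
move=> hb; rewrite /kerM /kerP /rho0.
case: (kerco (bnd_le d b)) => h1 _; case: (kerco (bnd_lt d b')) => _ h2.
exact: submx_trans h1 (submx_trans (bnd_le_lt hb) h2).
Qed.

Definition Dv : seq R := undup [seq d p.1 p.2 | p <- enum [set: X * X]].

Lemma notDv b : b \notin Dv -> kerP d b = kerM d b.
Proof.
move=> hb; rewrite /kerP /kerM /rho0; congr (kermx (cokermx _)).
apply: eq_bigl => p; rewrite le_eqVlt.
case: eqP => // e; case/negP: hb; rewrite mem_undup -e.
by apply: map_f; rewrite mem_enum inE.
Qed.

End PHL.

Lemma sum_mono (R : realFieldType) (s : seq R) (F : R -> nat) (P Q : pred R) :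
  (forall x, P x -> Q x) -> (\sum_(x <- s | P x) F x <= \sum_(x <- s | Q x) F x)%N.
Proof.
move=> h; rewrite (big_mkcond P) (big_mkcond Q); apply: leq_sum => x _.
by case hP: (P x); rewrite ?(h x hP).
Qed.

Lemma sum_step (R : realFieldType) (s : seq R) (F : R -> nat) (P Q : pred R) b :
  uniq s -> b \in s -> (forall x, P x -> Q x) -> ~~ P b -> Q b ->
  (\sum_(x <- s | P x) F x + F b <= \sum_(x <- s | Q x) F x)%N.
Proof.
move=> + + hPQ hPb hQb; elim: s => [|x s IH] //= /andP[xs us].
rewrite in_cons big_cons [in X in (_ <= X)%N]big_cons.
case: eqP => [<- _|ne /= bs].
  rewrite (negbTE hPb) hQb addnC leq_add2l; exact: sum_mono.
have := IH us bs.
case hP: (P x); first by rewrite (hPQ x hP); lia.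
case: (Q x) => //; lia.
Qed.

Section Main.
Variable R : realFieldType.
Variables X Z : finType.
Variable dX : X -> X -> R.
Variable dZ : Z -> Z -> R.
Variable f : X -> Z.

Local Notation blk := (blockM dX dZ f).

Lemma blkE a b : blk a b = gb (kerM dX a *m push f) (kerP dX a *m push f) (kerM dZ b) (kerP dZ b).
Proof. by []. Qed.

Lemma help1 a s : uniq s -> (\sum_(b <- s) blk a b <= mult dX a)%N.
Proof.
move=> us.
have -> : (\sum_(b <- s) blk a b = \sum_(b <- s) gb (kerM dX a *m push f) (kerP dX a *m push f) (kerM dZ b) (kerP dZ b))%N.
  by apply: eq_bigr.
have h := (rank_mul_diff (push f) (kerM_P dX a)).
rewrite /mult; apply: (leq_trans _ h).
apply: (@sumA _ _ _ _ _ _ _ (fun b => kerM dZ b) (fun b => kerP dZ b)).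
- by apply: submxMr; exact: kerM_P.
- by move=> b; apply: kerM_P.
- by move=> b b'; apply: kerP_M.
- exact: us.
Qed.

Lemma help2 b s : uniq s -> (\sum_(a <- s) blk a b <= mult dZ b)%N.
Proof.
move=> us.
have -> : (\sum_(a <- s) blk a b = \sum_(a <- s) gb (kerM dX a *m push f) (kerP dX a *m push f) (kerM dZ b) (kerP dZ b))%N.
  by apply: eq_bigr.
rewrite /mult.
apply: (@sumB _ _ _ _ _ (fun a => kerM dX a *m push f) (fun a => kerP dX a *m push f)).
- exact: kerM_P.
- by move=> a; apply: submxMr; exact: kerM_P.
- by move=> a a' h; apply: submxMr; exact: kerP_M.
- exact: us.
Qed.

Lemma blk_inZ a b : (0 < blk a b)%N -> b \in Dv dZ.
Proof.
apply: contraTT => hb; rewrite -leqNgt leqn0 blkE /gb (notDv hb) subn_eq0.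
by apply: mxrankS; rewrite addsmxSr.
Qed.

Lemma blk_inX a b : (0 < blk a b)%N -> a \in Dv dX.
Proof.
apply: contraTT => ha; rewrite -leqNgt leqn0 blkE /gb (notDv ha) subn_eq0.
by apply: mxrankS; rewrite addsmxSl.
Qed.

Definition offA a b := (\sum_(x <- Dv dZ | (x < b)%R) blk a x)%N.
Definition offB a b := (\sum_(x <- Dv dX | (x < a)%R) blk x b)%N.

Definition sig (p q : R * nat) : bool :=
  [&& 0 < p.1, 0 < q.1, (offA p.1 q.1 < p.2)%N, (p.2 <= offA p.1 q.1 + blk p.1 q.1)%N
    & q.2 == (p.2 - offA p.1 q.1 + offB p.1 q.1)%N].

Lemma offA_le a b : (0 < blk a b)%N -> (offA a b + blk a b <= mult dX a)%N.
Proof.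
move=> h; apply: leq_trans (sum_step _ (undup_uniq _) (blk_inZ h) (P := fun x => x < b)
   (Q := fun x => x <= b) _ _ _) _.
- by move=> x; apply: ltW.
- by rewrite ltxx.
- by [].
by rewrite -big_filter; apply: help1; apply: filter_uniq; apply: undup_uniq.
Qed.

Lemma offB_le a b : (0 < blk a b)%N -> (offB a b + blk a b <= mult dZ b)%N.
Proof.
move=> h; apply: leq_trans (sum_step (fun x => blk x b) (undup_uniq _) (blk_inX h) (P := fun x => x < a)
   (Q := fun x => x <= a) _ _ _) _.
- by move=> x; apply: ltW.
- by rewrite ltxx.
- by [].
by rewrite -big_filter; apply: help2; apply: filter_uniq; apply: undup_uniq.
Qed.

Lemma offA_step a b b' : (0 < blk a b)%N -> b < b' -> (offA a b + blk a b <= offA a b')%N.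
Proof.
move=> h hb; apply: (sum_step _ (undup_uniq _) (blk_inZ h) (P := fun x => x < b)
   (Q := fun x => x < b')).
- by move=> x hx; apply: lt_trans hx hb.
- by rewrite ltxx.
- by [].
Qed.

Lemma offB_step a a' b : (0 < blk a b)%N -> a < a' -> (offB a b + blk a b <= offB a' b)%N.
Proof.
move=> h hb; apply: (sum_step (fun x => blk x b) (undup_uniq _) (blk_inX h) (P := fun x => x < a)
   (Q := fun x => x < a')).
- by move=> x hx; apply: lt_trans hx hb.
- by rewrite ltxx.
- by [].
Qed.


Lemma sig_inRep p q : sig p q -> inRep dX p /\ inRep dZ q.
Proof.
case: p => a i; case: q => b j; rewrite /sig /= => /and5P[ha hb h1 h2 /eqP hj].
have hpos : (0 < blk a b)%N by lia.
have hA := offA_le hpos; have hB := offB_le hpos.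
split; split => //=; apply/andP; split; lia.
Qed.

Lemma sig_funR p q q' : sig p q -> sig p q' -> q = q'.
Proof.
case: p => a i; case: q => b j; case: q' => b' j'; rewrite /sig /=.
move=> /and5P[ha hb h1 h2 /eqP hj] /and5P[_ hb' h1' h2' /eqP hj'].
have hpos : (0 < blk a b)%N by lia.
have hpos' : (0 < blk a b')%N by lia.
case: (ltgtP b b') => hbb.
- have := offA_step hpos hbb; lia.
- have := offA_step hpos' hbb; lia.
- by subst b'; rewrite hj hj'.
Qed.

Lemma sig_funL p p' q : sig p q -> sig p' q -> p = p'.
Proof.
case: p => a i; case: p' => a' i'; case: q => b j; rewrite /sig /=.
move=> /and5P[ha hb h1 h2 /eqP hj] /and5P[ha' _ h1' h2' /eqP hj'].
have hpos : (0 < blk a b)%N by lia.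
have hpos' : (0 < blk a' b)%N by lia.
case: (ltgtP a a') => haa.
- have := offB_step hpos haa; lia.
- have := offB_step hpos' haa; lia.
- subst a'; congr (_, _); lia.
Qed.

Lemma card_pairs (I J : finType) (P : I -> J -> bool) :
  #|[set ij : I * J | P ij.1 ij.2]| = (\sum_(i : I) \sum_(j : J) (P i j : nat))%N.
Proof.
rewrite -sum1_card big_mkcond /= pair_big /=.
by apply: eq_bigr => -[i j] _; rewrite inE /=; case: (P i j).
Qed.

Lemma nmatchedE a b : 0 < a -> 0 < b -> nmatched dX dZ sig a b = blk a b.
Proof.
move=> ha hb; rewrite /nmatched (@card_pairs _ _ (fun (i : 'I_(mult dX a)) (j : 'I_(mult dZ b)) => sig (a, i.+1) (b, j.+1))).
set oA := offA a b; set oB := offB a b; set k := blk a b.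
set ma := mult dX a; set mb := mult dZ b.
have inner : forall i : 'I_ma,
  (\sum_(j : 'I_mb) (sig (a, i.+1) (b, j.+1) : nat))%N = ((oA <= i < oA + k)%N : nat).
  move=> i; case hi : (oA <= i < oA + k)%N.
  - have hk : (0 < k)%N by lia.
    have hB := offB_le hk.
    set x := (i - oA + oB)%N.
    have -> : (\sum_(j : 'I_mb) (sig (a, i.+1) (b, j.+1) : nat))%N =
              (\sum_(j < mb) ((x <= j < x.+1)%N : nat))%N.
      apply: eq_bigr => j _; rewrite /sig /= ha hb.
      have -> : (oA < i.+1)%N by lia.
      have -> : (i.+1 <= oA + k)%N by lia.
      have -> : (i.+1 - oA + oB)%N = x.+1 by rewrite /x; lia.
      by rewrite eqSS ltnS -eqn_leq eq_sym.
    rewrite interval_sum //; lia.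
  - rewrite big1 // => j _; apply/eqP; rewrite eqb0; apply/negP.
    rewrite /sig /= => /and5P[_ _ h1 h2 _].
    by move: hi; have -> : (oA <= i < oA + k)%N by lia.
rewrite (eq_bigr _ (fun i _ => inner i)) interval_sum; last lia.
case: (posnP k) => hk; first lia.
have hA := offA_le hk; lia.
Qed.

End Main.

Theorem lemma4p2 (R : realFieldType) (X Z : finType)
  (dX : X -> X -> R) (dZ : Z -> Z -> R) (f : X -> Z) :
  is_metric dX -> is_metric dZ -> non_expansive dX dZ f ->
  (forall a, 0 < a -> (0 < mult dX a)%N ->
     forall s : seq R, uniq s -> all (fun b => 0 < b) s ->
     (\sum_(b <- s) blockM dX dZ f a b <= mult dX a)%N) /\
  (forall b, 0 < b -> (0 < mult dZ b)%N ->
     forall s : seq R, uniq s -> all (fun a => 0 < a) s ->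
     (\sum_(a <- s) blockM dX dZ f a b <= mult dZ b)%N) /\
  (exists sigma : R * nat -> R * nat -> bool,
     partial_matching dX dZ sigma /\
     forall a b, 0 < a -> 0 < b -> nmatched dX dZ sigma a b = blockM dX dZ f a b).
Proof.
move=> _ _ _; split; [|split].
- by move=> a _ _ s us _; apply: help1.
- by move=> b _ _ s us _; apply: help2.
- exists (sig dX dZ f); split; last exact: nmatchedE.
  split; [exact: sig_inRep | exact: sig_funR | exact: sig_funL].
Qed.
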